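(* Let $G$ be a search game (as defined in the context) with ordinally consistent and solitary-search dominant payoffs. Then there exists a pure Nash equilibrium $s$ of $G$ that is socially optimal, i.e., $U(s)=U_{\mathrm{opt}}$.
   Context: A search game $G=(N,\Omega,\Pi,\mu,K,c,v)$ consists of: a finite set of players $N=\{1,\ldots,n\}$; a finite set $\Omega$ of locations; for each player $i$ a partition $\Pi_i$ of $\Omega$, with $\pi_i(\omega)$ the cell containing $\omega$; a common prior $\mu\in\Delta(\Omega)$ with $\mu(\pi_i)>0$ for every cell of every player, and $\mu(\omega|\pi_i)=\mu(\omega)/\mu(\pi_i)$ for $\omega\in\pi_i$; capacities $K_i\in\mathbb{N}$; costs $c_i:\{0,\ldots,K_i\}\to\mathbb{R}_{\ge0}$ with $c_i(0)=0$ and nondecreasing increments $c_i(k+1)-c_i(k)\ge c_i(k)-c_i(k-1)$; rewards $v_i^m(\omega)\ge0$ ($m$ = number of finders including $i$) with $v_i^{m+1}(\omega)\le v_i^m(\omega)$; social values $v_{\mathfrak{s}}(\omega)\ge0$. A pure strategy $s_i$ assigns to each cell $\pi_i$ a subset $s_i(\pi_i)\subseteq\pi_i$ of size at most $K_i$; $S$ is the set of pure profiles. With $m_s(\omega)=\sum_{i}\mathbf{1}_{\omega\in s_i(\pi_i(\omega))}$, player $i$'s payoff is $u_i(s)=\sum_{\omega}\mu(\omega)\big[\mathbf{1}_{\omega\in s_i(\pi_i(\omega))}v_i^{m_s(\omega)}(\omega)-c_i(|s_i(\pi_i(\omega))|)\big]$; a pure Nash equilibrium is a pure profile from which no player gains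 by a unilateral deviation to another pure strategy. The social payoff is $U(s)=\sum_{\omega}\mu(\omega)v_{\mathfrak{s}}(\omega)\mathbf{1}_{m_s(\omega)\ge1}$ and $U_{\mathrm{opt}}=\max_{s\in S}U(s)$. Payoffs are ordinally consistent if for every player $i$, every cell $\pi_i\in\Pi_i$ and all $\omega,\omega'\in\pi_i$: $\mu(\omega)v_i^1(\omega)<\mu(\omega')v_i^1(\omega')$ implies $\mu(\omega)v_{\mathfrak{s}}(\omega)\le\mu(\omega')v_{\mathfrak{s}}(\omega')$. Payoffs are solitary-search dominant if for every player $i$, every cell $\pi_i\in\Pi_i$ and all $\omega,\omega'\in\pi_i$: $\mu(\omega|\pi_i)v_i^1(\omega)\ge\mu(\omega'|\pi_i)v_i^2(\omega')$ and $\mu(\omega|\pi_i)v_i^1(\omega)\ge c_i(K_i)-c_i(K_i-1)$. *)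

(* Defs.v *)
From HB Require Import structures.
From mathcomp Require Import all_boot all_order all_algebra.
Set Implicit Arguments. Unset Strict Implicit. Unset Printing Implicit Defensive.
Import Order.TTheory GRing.Theory Num.Theory.
Local Open Scope ring_scope.

Record searchGame (R : realFieldType) (I Omega : finType) := SearchGame {
  part : I -> {set {set Omega}};
  part_ok : forall i, partition (part i) [set: Omega];
  mu : Omega -> R;
  mu_ge0 : forall w, 0 <= mu w;
  mu_sum1 : \sum_(w : Omega) mu w = 1;
  mu_cell_pos : forall i C, C \in part i -> 0 < \sum_(w in C) mu w;
  cap : I -> nat;
  cap_pos : forall i, (0 < cap i)%N;
  cost : I -> nat -> R;
  cost0 : forall i, cost i 0%N = 0;
  cost_ge0 : forall i k, (k <= cap i)%N -> 0 <= cost i k;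
  cost_convex : forall i k, (0 < k)%N -> (k < cap i)%N ->
      cost i k - cost i k.-1 <= cost i k.+1 - cost i k;
  (* rew i m w = v_i^m(w), m = number of finders (m >= 1) *)
  rew : I -> nat -> Omega -> R;
  rew_ge0 : forall i m w, (0 < m)%N -> 0 <= rew i m w;
  rew_noninc : forall i m w, (0 < m)%N -> rew i m.+1 w <= rew i m w;
  svalue : Omega -> R;
  svalue_ge0 : forall w, 0 <= svalue w
}.

Section Game.
Variables (R : realFieldType) (I Omega : finType) (G : searchGame R I Omega).

Definition cell (i : I) (w : Omega) : {set Omega} := pblock (part G i) w.

Definition mu_set (C : {set Omega}) : R := \sum_(w in C) mu G w.

Definition mu_cond (w : Omega) (C : {set Omega}) : R := mu G w / mu_set C.

(* A pure strategy of player i: to each cell, a subset of that cell of size <= K_i.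
   (Values on non-cells are irrelevant.) *)
Definition strategy := {set Omega} -> {set Omega}.
Definition profile := I -> strategy.

Definition valid_strategy (i : I) (si : strategy) : Prop :=
  forall C, C \in part G i -> si C \subset C /\ (#|si C| <= cap G i)%N.

Definition valid_profile (s : profile) : Prop :=
  forall i, valid_strategy i (s i).

Definition searches (s : profile) (i : I) (w : Omega) : bool :=
  w \in s i (cell i w).

Definition finders (s : profile) (w : Omega) : nat :=
  #|[set i | searches s i w]|.

Definition payoff (s : profile) (i : I) : R :=
  \sum_(w : Omega) mu G w *
    ((if searches s i w then rew G i (finders s w) w else 0)
     - cost G i #|s i (cell i w)|).

Definition social (s : profile) : R :=
  \sum_(w : Omega) mu G w * (if (0 < finders s w)%N then svalue G w else 0).

Definition deviate (s : profile) (i : I) (t : strategy) : profile :=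
  fun j => if j == i then t else s j.

Definition is_pure_NE (s : profile) : Prop :=
  valid_profile s /\
  forall i t, valid_strategy i t -> payoff (deviate s i t) i <= payoff s i.

Definition socially_optimal (s : profile) : Prop :=
  valid_profile s /\ forall t, valid_profile t -> social t <= social s.

Definition ordinally_consistent : Prop :=
  forall i C, C \in part G i -> forall w w', w \in C -> w' \in C ->
    mu G w * rew G i 1 w < mu G w' * rew G i 1 w' ->
    mu G w * svalue G w <= mu G w' * svalue G w'.

Definition solitary_search_dominant : Prop :=
  forall i C, C \in part G i -> forall w w', w \in C -> w' \in C ->
    mu_cond w' C * rew G i 2 w' <= mu_cond w C * rew G i 1 w /\
    cost G i (cap G i) - cost G i (cap G i).-1 <= mu_cond w C * rew G i 1 w.

End Game.

(* Main.v *)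
Require Import Defs.
From Stdlib Require Import Classical.
From HB Require Import structures.
From mathcomp Require Import all_boot all_order all_algebra.
From mathcomp Require Import ring lra zify.
Import Order.TTheory GRing.Theory Num.Theory.
Local Open Scope ring_scope.

Set Implicit Arguments. Unset Strict Implicit. Unset Printing Implicit Defensive.

Lemma argmax_ex (R : realFieldType) (T : finType) (P : {set T}) (F : T -> R) x0 :
  x0 \in P -> exists2 x, x \in P & forall y, y \in P -> F y <= F x.
Proof.
move=> Px0.
case: (@arg_maxP _ R T x0 (mem P) F Px0) => x Px Hx.
by exists x => // y Py; apply: Hx.
Qed.

Section Stab.
Variables (R : realFieldType) (O : finType).

Definition stable (C T : {set O}) (v : O -> R) (k : nat) (mc : nat -> R) :=
  [/\ T \subset C, (#|T| <= k)%N,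
      (forall w w', w \in T -> w' \in C -> w' \notin T -> v w' <= v w),
      (forall w, w \in T -> mc #|T| <= v w) &
      ((#|T| < k)%N -> forall w', w' \in C -> w' \notin T -> v w' <= mc #|T|.+1)].

Lemma stable_mono (C T : {set O}) (v v' : O -> R) (k : nat) (mc : nat -> R) :
  (forall w, w \in T -> v w <= v' w) ->
  (forall w, w \in C -> w \notin T -> v' w <= v w) ->
  stable C T v k mc -> stable C T v' k mc.
Proof.
move=> Hin Hout [sTC leTk Hi Hii Hiii]; split => //.
- move=> w w' wT w'C w'T; apply: le_trans (Hout _ w'C w'T) _.
  by apply: le_trans (Hi _ _ wT w'C w'T) (Hin _ wT).
- by move=> w wT; apply: le_trans (Hii _ wT) (Hin _ wT).
- by move=> lt w' w'C w'T; apply: le_trans (Hout _ w'C w'T) (Hiii lt _ w'C w'T).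
Qed.

Lemma stable_ins (C T : {set O}) (v : O -> R) (k : nat) (mc : nat -> R) :
  stable C T v k mc ->
  stable C T v k.+1 mc \/
  exists r0, [/\ r0 \in C, r0 \notin T & stable C (r0 |: T) v k.+1 mc].
Proof.
move=> [sTC leTk Hi Hii Hiii].
have [ltTk|geTk] := ltnP #|T| k.
  left; split => //; first by apply: leqW.
  by move=> _; apply: Hiii.
have eTk : #|T| = k by apply/eqP; rewrite eqn_leq leTk geTk.
case: (boolP [forall w', (w' \in C :\: T) ==> (v w' <= mc #|T|.+1)]) => [/forall_inP Hall|].
  left; split => //; first by apply: leqW.
  by move=> _ w' w'C w'T; apply: Hall; rewrite inE w'T w'C.
rewrite negb_forall => /existsP [w0]; rewrite negb_imply => /andP [w0CT].
rewrite -ltNge => Hw0.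
have [r0 r0CT Hr0] := argmax_ex v w0CT.
move: (r0CT); rewrite inE => /andP [r0T r0C].
right; exists r0; split => //.
have cT : #|r0 |: T| = k.+1 by rewrite cardsU1 r0T eTk.
split.
- by rewrite subUset sub1set r0C sTC.
- by rewrite cT.
- move=> w w'; rewrite !in_setU1 negb_or => /orP [/eqP->|wT] w'C /andP [w'r0 w'T].
    by apply: Hr0; rewrite inE w'T w'C.
  exact: Hi.
- move=> w; rewrite cT -eTk in_setU1 => /orP [/eqP->|wT].
    by apply: ltW; apply: lt_le_trans Hw0 (Hr0 _ w0CT).
  apply: ltW; apply: lt_le_trans Hw0 _; apply: le_trans (Hr0 _ w0CT) _.
  by apply: Hi => //; move: r0CT; rewrite inE => /andP [].
- by rewrite cT ltnn.
Qed.


Lemma stable_step (C T : {set O}) (v0 v : O -> R) (k : nat) (mc : nat -> R) r :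
  stable C T v0 k mc -> r \in T ->
  (forall w, w \in C -> w != r -> v w = v0 w) -> v r <= v0 r ->
  (forall s t, (0 < s)%N -> (s <= t)%N -> (t <= k)%N -> mc s <= mc t) ->
  stable C T v k mc \/
  (exists r', [/\ r' \in C, r' \notin T, v r < v r' & stable C (r' |: (T :\ r)) v k mc]) \/
  stable C (T :\ r) v k mc.
Proof.
move=> [sTC leTk Hi Hii Hiii] rT vE vr mono.
have inC w : w \in T -> w \in C by move=> wT; apply: (subsetP sTC).
have vT w : w \in T -> w != r -> v w = v0 w by move=> wT; apply: vE; apply: inC.
have vO w : w \in C -> w \notin T -> v w = v0 w.
  by move=> wC wT; apply: vE => //; apply: contraNneq wT => ->.
have nT : #|T| = (#|T :\ r|).+1 by rewrite (cardsD1 r T) rT.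
case: (boolP [exists w', (w' \in C :\: T) && ((v r < v w') && (mc #|T| <= v w'))]).
  move=> /existsP [w0 /andP [w0CT /andP [Hw0a Hw0b]]].
  have [r' r'CT Hr'] := argmax_ex v w0CT.
  move: (r'CT); rewrite inE => /andP [r'T r'C].
  have vrr' : v r < v r' by apply: lt_le_trans Hw0a (Hr' _ w0CT).
  have mcr' : mc #|T| <= v r' by apply: le_trans Hw0b (Hr' _ w0CT).
  have r'n : r' \notin T :\ r by rewrite inE negb_and r'T orbT.
  have cS : #|r' |: (T :\ r)| = #|T| by rewrite cardsU1 r'n nT.
  have memS w : (w \in r' |: (T :\ r)) = (w == r') || ((w != r) && (w \in T)).
    by rewrite !inE.
  right; left; exists r'; split => //; split.
  - rewrite subUset sub1set r'C /=; apply: subset_trans sTC; exact: subsetDl.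
  - by rewrite cS.
  - move=> w w'; rewrite memS => /orP [/eqP->|].
      move=> w'C; rewrite memS negb_or negb_and negbK => /andP [_ /orP [/eqP->|w'T]].
        exact: ltW.
      by apply: Hr'; rewrite inE w'T w'C.
    move=> /andP [wr wT] w'C; rewrite memS negb_or negb_and negbK.
    move=> /andP [_ /orP [/eqP->|w'T]].
      rewrite (vT _ wT wr); apply: ltW; apply: lt_le_trans vrr' _.
      by rewrite (vO _ r'C r'T); apply: Hi.
    by rewrite (vT _ wT wr) (vO _ w'C w'T); apply: Hi.
  - move=> w; rewrite cS memS => /orP [/eqP->//|].
    by move=> /andP [wr wT]; rewrite (vT _ wT wr); apply: Hii.
  - rewrite cS => ltk w' w'C; rewrite memS negb_or negb_and negbK.
    move=> /andP [_ /orP [/eqP->|w'T]].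
      apply: ltW; apply: lt_le_trans vrr' _.
      by rewrite (vO _ r'C r'T); apply: Hiii.
    by rewrite (vO _ w'C w'T); apply: Hiii.
rewrite negb_exists => /forallP Hno.
have HnoA w' : w' \in C -> w' \notin T -> v w' <= v r \/ v w' < mc #|T|.
  move=> w'C w'T; move: (Hno w'); rewrite inE w'T w'C /= negb_and -!leNgt -ltNge.
  by case/orP; [left|right].
have [vrlt|vrge] := ltP (v r) (mc #|T|).
  right; right; split.
  - by apply: subset_trans sTC; exact: subsetDl.
  - by apply: leq_trans leTk; rewrite nT.
  - move=> w w'; rewrite !inE => /andP [wr wT] w'C; rewrite negb_and negbK.
    case/orP => [/eqP->|w'T].
      by rewrite (vT _ wT wr); apply: ltW; apply: lt_le_trans vrlt (Hii _ wT).
    by rewrite (vT _ wT wr) (vO _ w'C w'T); apply: Hi.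
  - move=> w; rewrite !inE => /andP [wr wT]; rewrite (vT _ wT wr).
    apply: le_trans (Hii _ wT); apply: mono => //.
      by rewrite (cardsD1 w (T :\ r)) !inE wr wT.
    by rewrite nT.
  - move=> ltk w' w'C; rewrite !inE negb_and negbK; case/orP => [/eqP->|w'T].
      by rewrite -nT; apply: ltW.
    rewrite -nT; case: (HnoA _ w'C w'T) => H; last exact: ltW.
    by apply: le_trans H (ltW vrlt).
left; split => //.
- move=> w w' wT w'C w'T; case: (eqVneq w r) => [->|wr].
    by case: (HnoA _ w'C w'T) => // H; apply: ltW; apply: lt_le_trans H vrge.
  by rewrite (vT _ wT wr) (vO _ w'C w'T); apply: Hi.
- move=> w wT; case: (eqVneq w r) => [->//|wr].
  by rewrite (vT _ wT wr); apply: Hii.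
- by move=> ltk w' w'C w'T; rewrite (vO _ w'C w'T); apply: Hiii.
Qed.


Definition symd (A B : {set O}) := [set x | (x \in A) != (x \in B)].

Lemma symd_lt (A A' B : {set O}) x :
  (forall y, y != x -> (y \in A') = (y \in A)) ->
  (x \in A) != (x \in B) -> (x \in A') = (x \in B) ->
  (#|symd A' B| < #|symd A B|)%N.
Proof.
move=> Hy HA HA'; apply: proper_card; apply/properP; split.
  apply/subsetP => y; rewrite !inE; case: (eqVneq y x) => [->|yx].
    by rewrite HA' eqxx.
  by rewrite Hy.
by exists x; rewrite !inE ?HA ?HA' ?eqxx.
Qed.

Lemma stable_opt (C T : {set O}) (v : O -> R) (k : nat) (cc : nat -> R) :
  (forall s t, (0 < s)%N -> (s <= t)%N -> (t <= k)%N -> cc s - cc s.-1 <= cc t - cc t.-1) ->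
  stable C T v k (fun t => cc t - cc t.-1) ->
  forall T' : {set O}, T' \subset C -> (#|T'| <= k)%N ->
  \sum_(w in T') v w - cc #|T'| <= \sum_(w in T) v w - cc #|T|.
Proof.
move=> mono [sTC leTk Hi Hii Hiii] T'.
move: {2}#|symd T' T| (leqnn #|symd T' T|) => n.
elim: n T' => [|n IH] T' Hn sT'C leT'k.
  have E : T' = T.
    apply/setP => x; move: Hn; rewrite leqn0 cards_eq0 => /eqP H0.
    have : x \notin symd T' T by rewrite H0 inE.
    by rewrite inE negbK => /eqP.
  by rewrite E.
case: (eqVneq T' T) => [->//|neq].
have [ltTT'|leT'T] := ltnP #|T| #|T'|.
  have [w' w'T' w'T] : exists2 w', w' \in T' & w' \notin T.
    apply/exists_inP; rewrite -negb_forall_in; apply/negP => /forall_inP H.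
    have : T' \subset T by apply/subsetP => x /H.
    by move/subset_leq_card; rewrite leqNgt ltTT'.
  set S := T' :\ w'.
  have cT' : #|T'| = #|S|.+1 by rewrite (cardsD1 w' T') w'T'.
  have ltS : (#|symd S T| < #|symd T' T|)%N.
    apply: (symd_lt (x := w')); first by move=> y yw; rewrite !inE yw.
      by rewrite w'T' (negbTE w'T).
    by rewrite !inE eqxx (negbTE w'T).
  have IHS := IH S (leq_trans (leq_trans ltS Hn) (leqnn _)).
  have leSk : (#|S| <= k)%N by apply: leq_trans leT'k; rewrite cT'.
  have HS := IHS (subset_trans (subsetDl _ _) sT'C) leSk.
  apply: le_trans HS; rewrite (big_setD1 w' w'T') /= -/S cT' /=.
  have H1 := Hiii (leq_trans ltTT' leT'k) _ (subsetP sT'C _ w'T') w'T; rewrite /= in H1.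
  have H2 : cc #|T|.+1 - cc #|T| <= cc #|S|.+1 - cc #|S|.
    by apply: (mono #|T|.+1 #|S|.+1) => //; rewrite -cT'.
  lra.
have [w wT wT'] : exists2 w, w \in T & w \notin T'.
  apply/exists_inP; rewrite -negb_forall_in; apply/negP => /forall_inP H.
  have sTT' : T \subset T' by apply/subsetP => x /H.
  move: neq; rewrite eq_sym eqEcard sTT' /= => /negP; apply.
  exact: leT'T.
have wC : w \in C by apply: (subsetP sTC).
have [ltT'T|geT'T] := ltnP #|T'| #|T|.
  set S := w |: T'.
  have cS : #|S| = #|T'|.+1 by rewrite cardsU1 wT'.
  have ltS : (#|symd S T| < #|symd T' T|)%N.
    apply: (symd_lt (x := w)); first by move=> y yw; rewrite !inE (negbTE yw).
      by rewrite wT (negbTE wT').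
    by rewrite !inE eqxx wT.
  have IHS := IH S (leq_trans (leq_trans ltS Hn) (leqnn _)).
  have leSk : (#|S| <= k)%N by rewrite cS; apply: leq_trans ltT'T leTk.
  have sSC : S \subset C by rewrite subUset sub1set wC sT'C.
  have HS := IHS sSC leSk.
  apply: le_trans HS; rewrite (big_setU1 _ wT') /= cS.
  have H1 := Hii _ wT.
  have H2 : cc #|T'|.+1 - cc #|T'| <= cc #|T| - cc #|T|.-1.
    by apply: (mono #|T'|.+1 #|T|).
  lra.
have eqc : #|T'| = #|T| by apply/eqP; rewrite eqn_leq leT'T geT'T.
have [w' w'T' w'T] : exists2 w', w' \in T' & w' \notin T.
  apply/exists_inP; rewrite -negb_forall_in; apply/negP => /forall_inP H.
  have sTT' : T' \subset T by apply/subsetP => x /H.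
  by move: neq; rewrite eqEcard sTT' eqc leqnn.
have w'C : w' \in C by apply: (subsetP sT'C).
set S1 := T' :\ w'.
set S := w |: S1.
have wS1 : w \notin S1 by rewrite !inE negb_and wT' orbT.
have cS : #|S| = #|T'| by rewrite cardsU1 wS1 (cardsD1 w' T') w'T'.
have ltS1 : (#|symd S1 T| < #|symd T' T|)%N.
  apply: (symd_lt (x := w')); first by move=> y yw; rewrite !inE yw.
    by rewrite w'T' (negbTE w'T).
  by rewrite !inE eqxx (negbTE w'T).
have ltS : (#|symd S T| < #|symd S1 T|)%N.
  apply: (symd_lt (x := w)); first by move=> y yw; rewrite /S in_setU1 (negbTE yw).
    by rewrite wT (negbTE wS1).
  by rewrite !inE eqxx wT.
have IHS := IH S (leq_trans (leq_trans ltS (ltnW ltS1)) Hn).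
have leSk : (#|S| <= k)%N by rewrite cS.
have sSC : S \subset C.
  by rewrite subUset sub1set wC; apply: subset_trans (subsetDl _ _) sT'C.
have HS := IHS sSC leSk.
apply: le_trans HS; rewrite (big_setU1 _ wS1) /= cS (big_setD1 w' w'T') /= -/S1.
have H1 := Hi _ _ wT w'C w'T.
lra.
Qed.

End Stab.


Section Game2.
Variables (R : realFieldType) (I Omega : finType) (G : searchGame R I Omega).

Definition asg := {ffun I -> {set Omega}}.
Definition cnt (X : asg) w := #|[set j | w \in X j]|.
Definition oth (X : asg) i w := #|[set j | (j != i) && (w \in X j)]|.
Definition fv i m w := mu G w * rew G i m w.
Definition valx (X : asg) i w := fv i (oth X i w).+1 w.
Definition cc i (C : {set Omega}) t := mu_set G C * cost G i t.
Definition mcf i C t := cc i C t - cc i C t.-1.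
Definition NEk (k : I -> {set Omega} -> nat) (X : asg) :=
  forall i C, C \in part G i -> stable C (X i :&: C) (valx X i) (k i C) (mcf i C).
Definition v0 (orig : Omega -> nat) (X : asg) i w :=
  if w \in X i then fv i (maxn 1 (orig w)) w else fv i (orig w).+1 w.
Definition cnt_ok orig (X : asg) (hot : option Omega) :=
  forall w, cnt X w = (orig w + (hot == Some w))%N.
Definition Inv k orig (X : asg) (hot : option Omega) :=
  cnt_ok orig X hot /\
  (forall i C, C \in part G i -> stable C (X i :&: C) (v0 orig X i) (k i C) (mcf i C)).
Definition upd (X : asg) i S : asg := [ffun j => if j == i then S else X j].

Lemma card_split (P : pred I) i :
  #|[set j | P j]| = (P i + #|[set j | (j != i) && P j]|)%N.
Proof.
rewrite (cardsD1 i) inE; congr (_ + _)%N; apply: eq_card => j; rewrite !inE.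
by [].
Qed.

Lemma cnt_oth X i w : cnt X w = (oth X i w + (w \in X i))%N.
Proof. by rewrite /cnt /oth (card_split (fun j => w \in X j) i) addnC. Qed.

Lemma upd_i X i S : upd X i S i = S.
Proof. by rewrite ffunE eqxx. Qed.

Lemma upd_j X i S j : j != i -> upd X i S j = X j.
Proof. by move=> ji; rewrite ffunE (negbTE ji). Qed.

Lemma oth_upd X i S w : oth (upd X i S) i w = oth X i w.
Proof.
rewrite /oth; apply: eq_card => j; rewrite !inE; case: (eqVneq j i) => //= ji.
by rewrite upd_j.
Qed.

Lemma val_upd X i S w : valx (upd X i S) i w = valx X i w.
Proof. by rewrite /valx oth_upd. Qed.

Lemma cnt_upd X i S w : cnt (upd X i S) w = (oth X i w + (w \in S))%N.
Proof. by rewrite (cnt_oth _ i) oth_upd upd_i. Qed.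

Lemma fv_mono i m n w : (0 < m)%N -> (m <= n)%N -> fv i n w <= fv i m w.
Proof.
move=> m0; elim: n => [|n IH]; first by rewrite leqn0 => /eqP E; move: m0; rewrite E.
rewrite leq_eqVlt => /orP [/eqP <-//|]; rewrite ltnS => mn.
apply: le_trans (IH mn); rewrite /fv ler_wpM2l ?mu_ge0 //.
by apply: rew_noninc; apply: leq_trans mn.
Qed.

Lemma part_cov i : cover (part G i) = [set: Omega].
Proof. exact: cover_partition (part_ok G i). Qed.

Lemma cell_part i w : cell G i w \in part G i.
Proof. by apply: pblock_mem; rewrite part_cov inE. Qed.

Lemma in_cell i w : w \in cell G i w.
Proof. by rewrite /cell mem_pblock part_cov inE. Qed.

Lemma cell_eq i C w : C \in part G i -> w \in C -> cell G i w = C.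
Proof. by move=> CP wC; apply: def_pblock => //; apply: partition_trivIset (part_ok G i). Qed.

Lemma cell_disj i C C' w : C \in part G i -> C' \in part G i -> w \in C -> w \in C' -> C = C'.
Proof. by move=> CP C'P wC wC'; rewrite -(cell_eq CP wC) (cell_eq C'P wC'). Qed.

Lemma mu_set_pos i C : C \in part G i -> 0 < mu_set G C.
Proof. exact: mu_cell_pos. Qed.

Lemma mcf_mono i C s t : C \in part G i -> (0 < s)%N -> (s <= t)%N -> (t <= cap G i)%N ->
  mcf i C s <= mcf i C t.
Proof.
move=> CP s0; elim: t => [|t IH]; first by rewrite leqn0 => /eqP E; move: s0; rewrite E.
rewrite leq_eqVlt => /orP [/eqP <-//|]; rewrite ltnS => st tc.
apply: le_trans (IH st (ltnW tc)) _.
rewrite /mcf /cc /= -!mulrBr ler_wpM2l ?(ltW (mu_set_pos CP)) //.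
by apply: cost_convex => //; apply: leq_trans s0 st.
Qed.

Lemma val_v0 orig X hot i w : cnt_ok orig X hot ->
  valx X i w <= v0 orig X i w /\ (hot != Some w -> valx X i w = v0 orig X i w).
Proof.
move=> Hc; have := Hc w; rewrite (cnt_oth X i) /valx /v0.
case: (boolP (w \in X i)) => wX /=; case: (eqVneq hot (Some w)) => hw /=.
- move=> E; have -> : oth X i w = orig w by lia.
  by split => //; apply: fv_mono; lia.
- move=> E; have -> : (oth X i w).+1 = maxn 1 (orig w) by lia.
  by split.
- move=> E; have -> : oth X i w = (orig w).+1 by lia.
  by split => //; apply: fv_mono; lia.
- by move=> E; have -> : oth X i w = orig w by lia.
Qed.

Lemma stab_val_of_v0 (k : nat) (mc : nat -> R) orig X (hot : option Omega) i (C : {set Omega}) : cnt_ok orig X hot ->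
  (forall r, hot = Some r -> r \notin X i :&: C) ->
  stable C (X i :&: C) (v0 orig X i) k mc -> stable C (X i :&: C) (valx X i) k mc.
Proof.
move=> Hc Hh; apply: stable_mono => w wT.
  have [_ ->] := val_v0 i w Hc => //.
  by apply/eqP => E; move: (Hh _ E); rewrite wT.
by move=> _; have [] := val_v0 i w Hc.
Qed.

Lemma stab_v0_of_val (k : nat) (mc : nat -> R) orig X (hot : option Omega) i (C : {set Omega}) : cnt_ok orig X hot ->
  (forall r, hot = Some r -> r \in C -> r \in X i) ->
  stable C (X i :&: C) (valx X i) k mc -> stable C (X i :&: C) (v0 orig X i) k mc.
Proof.
move=> Hc Hh; apply: stable_mono => w.
  by move=> _; have [] := val_v0 i w Hc.
move=> wC wT; have [_ ->] := val_v0 i w Hc => //.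
by apply/eqP => E; move: wT; rewrite inE (Hh _ E wC) wC.
Qed.

Lemma Inv_NE k orig X : Inv k orig X None -> NEk k X.
Proof.
by move=> [Hc Hs] i C CP; apply: (stab_val_of_v0 Hc) (Hs _ _ CP).
Qed.

Lemma NE_Inv k X : NEk k X -> Inv k (fun w => cnt X w) X None.
Proof.
move=> H; have Hc : cnt_ok (fun w => cnt X w) X None by move=> w; rewrite addn0.
by split => // i C CP; apply: (stab_v0_of_val Hc) (H _ _ CP).
Qed.

Lemma stab_frame (k : nat) (mc : nat -> R) orig (Y Z : asg) j (C : {set Omega}) :
  (forall w, w \in C -> (w \in Y j) = (w \in Z j)) ->
  stable C (Z j :&: C) (v0 orig Z j) k mc -> stable C (Y j :&: C) (v0 orig Y j) k mc.
Proof.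
move=> E; have -> : Y j :&: C = Z j :&: C.
  apply/setP => w; rewrite !inE; case: (boolP (w \in C)) => wC.
    by rewrite (E w wC).
  by rewrite !andbF.
apply: stable_mono => w.
  by rewrite inE => /andP [_ wC]; rewrite /v0 (E w wC).
by move=> wC _; rewrite /v0 (E w wC).
Qed.

Lemma upd_frame (k k' : I -> {set Omega} -> nat) (orig : Omega -> nat) (X : asg) i (C S : {set Omega}) :
  C \in part G i ->
  (forall j C', C' \in part G j -> (j != i) || (C' != C) -> k' j C' = k j C') ->
  (forall w, w \notin C -> (w \in S) = (w \in X i)) ->
  (forall j C', C' \in part G j -> stable C' (X j :&: C') (v0 orig X j) (k j C') (mcf j C')) ->
  forall j C', C' \in part G j -> (j != i) || (C' != C) ->
  stable C' (upd X i S j :&: C') (v0 orig (upd X i S) j) (k' j C') (mcf j C').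
Proof.
move=> CP Hk HS Hst j C' C'P ne; rewrite Hk //.
apply: (stab_frame (Z := X)) (Hst _ _ C'P) => w wC'.
case: (eqVneq j i) => [eji|ji]; last by rewrite upd_j.
subst j; rewrite upd_i; apply: HS; apply/negP => wC.
by move: ne; rewrite eqxx /= (cell_disj C'P CP wC' wC) eqxx.
Qed.

Definition Phi orig (X : asg) := \sum_i \sum_(w in X i) fv i (orig w).+1 w.

Lemma Phi_upd orig X i S :
  Phi orig (upd X i S) = Phi orig X - \sum_(w in X i) fv i (orig w).+1 w
                                     + \sum_(w in S) fv i (orig w).+1 w.
Proof.
rewrite /Phi (bigD1 i) //= [in RHS](bigD1 i) //= upd_i.
have -> : \sum_(j | j != i) \sum_(w in upd X i S j) fv j (orig w).+1 w =
          \sum_(j | j != i) \sum_(w in X j) fv j (orig w).+1 w.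
  by apply: eq_bigr => j ji; rewrite upd_j.
lra.
Qed.

Lemma step (k : I -> {set Omega} -> nat) orig X hot :
  (forall i C, C \in part G i -> (k i C <= cap G i)%N) -> Inv k orig X hot ->
  NEk k X \/ (exists X2 hot2, Inv k orig X2 hot2 /\ Phi orig X < Phi orig X2) \/
  (exists X2, NEk k X2 /\ cnt_ok orig X2 None).
Proof.
move=> kc [Hc Hs].
case: (classic (exists i C, C \in part G i /\
          ~ stable C (X i :&: C) (valx X i) (k i C) (mcf i C))); last first.
  move=> Hno; left => i C CP; apply: NNPP => Hn; apply: Hno; exists i, C; split => //.
move=> [i [C [CP Hns]]].
case E: hot => [r|]; last first.
  by exfalso; apply: Hns; apply: (stab_val_of_v0 Hc) (Hs _ _ CP); rewrite E.
case: (boolP (r \in X i :&: C)) => rT; last first.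
  by exfalso; apply: Hns; apply: (stab_val_of_v0 Hc) (Hs _ _ CP) => r0; rewrite E => -[<-].
have rC : r \in C by move: rT; rewrite inE => /andP [].
have rX : r \in X i by move: rT; rewrite inE => /andP [].
have Hr := Hc r; rewrite E eqxx (cnt_oth X i) rX in Hr.
have hv : forall w, w \in C -> w != r -> valx X i w = v0 orig X i w.
  move=> w _ wr; have [_ ->] := val_v0 i w Hc => //; rewrite E.
  by apply/eqP => -[Er]; move: wr; rewrite Er eqxx.
have hr : valx X i r <= v0 orig X i r by have [] := val_v0 i r Hc.
have mono : forall s t, (0 < s)%N -> (s <= t)%N -> (t <= k i C)%N -> mcf i C s <= mcf i C t.
  by move=> s t s0 st tk; apply: mcf_mono CP s0 st (leq_trans tk (kc _ _ CP)).
case: (stable_step (Hs _ _ CP) rT hv hr mono) => [H|[[r' [r'C r'T lt Hst]]|Hst]].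
- by exfalso.
- right; left; set S := r' |: (X i :\ r); exists (upd X i S), (Some r').
  have r'X : r' \notin X i by apply: contra r'T => h; rewrite inE h r'C.
  have r'r : r' != r by apply: contraNneq r'X => ->.
  have memS w : (w \in S) = (w == r') || ((w != r) && (w \in X i)) by rewrite !inE.
  have Hr' := Hc r'; rewrite E (cnt_oth X i) (negbTE r'X) in Hr'.
  have Er' : (Some r == Some r') = false by apply/eqP => -[Er]; move: r'r; rewrite Er eqxx.
  rewrite Er' in Hr'.
  have Hc2 : cnt_ok orig (upd X i S) (Some r').
    move=> w; rewrite cnt_upd memS.
    case: (eqVneq w r') => [->|wr'] /=.
      by rewrite eqxx; clear -Hr'; lia.
    case: (eqVneq w r) => [Ew|wr] /=.
      subst w.
      have -> : (Some r' == Some r) = false by rewrite eq_sym Er'.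
      clear -Hr; lia.
    have := Hc w; rewrite (cnt_oth X i) E.
    have -> : (Some r == Some w) = false by apply/eqP => -[Er]; move: wr; rewrite Er eqxx.
    have -> : (Some r' == Some w) = false by apply/eqP => -[Er]; move: wr'; rewrite Er eqxx.
    by [].
  split; first split => //.
    move=> j C' C'P; case: (boolP ((j != i) || (C' != C))) => ne.
      apply: (upd_frame (k := k) (C := C) CP) => //.
      move=> w wC; rewrite memS; have -> : (w == r') = false.
        by apply/eqP => Ew; move: wC; rewrite Ew r'C.
      have -> : (w != r) = true by apply/eqP => Ew; move: wC; rewrite Ew rC.
      by [].
    move: ne; rewrite negb_or !negbK => /andP [/eqP -> /eqP ->].
    apply: (stab_v0_of_val Hc2) => [r0 [<-] _|]; first by rewrite upd_i !inE eqxx.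
    have -> : upd X i S i :&: C = r' |: (X i :&: C :\ r).
      apply/setP => w; rewrite upd_i !inE.
      by case: (eqVneq w r') => [->|_] /=; [exact: r'C | rewrite andbA].
    by apply: stable_mono Hst => w; rewrite val_upd.
  rewrite Phi_upd (big_setD1 r rX) /= (big_setU1 _) /=; last by rewrite !inE negb_and r'X orbT.
  move: lt; rewrite /valx.
  have -> : oth X i r = orig r by clear -Hr; lia.
  have -> : oth X i r' = orig r' by clear -Hr'; lia.
  move=> lt; lra.
- right; right; set S := X i :\ r; exists (upd X i S).
  have Hc2 : cnt_ok orig (upd X i S) None.
    move=> w; rewrite cnt_upd /=; have := Hc w; rewrite (cnt_oth X i) E.
    case: (eqVneq w r) => [Ew|wr].
      by subst w; rewrite !inE eqxx rX /= eqxx => H; clear -H; lia.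
    have -> : (Some r == Some w) = false by apply/eqP => -[Er]; move: wr; rewrite Er eqxx.
    by rewrite !inE wr /= => H; clear -H; lia.
  split => //; apply: (@Inv_NE _ orig); split => // j C' C'P.
  case: (boolP ((j != i) || (C' != C))) => ne.
    apply: (upd_frame (k := k) (C := C) CP) => //.
    move=> w wC; rewrite !inE; have -> : (w != r) = true by apply/eqP => Ew; move: wC; rewrite Ew rC.
    by [].
  move: ne; rewrite negb_or !negbK => /andP [/eqP -> /eqP ->].
  apply: (stab_v0_of_val Hc2) => [r0 //|].
  have -> : upd X i S i :&: C = (X i :&: C :\ r).
    by apply/setP => w; rewrite upd_i !inE andbA.
  by apply: stable_mono Hst => w; rewrite val_upd.
Qed.

Lemma cascade (k : I -> {set Omega} -> nat) orig :
  (forall i C, C \in part G i -> (k i C <= cap G i)%N) ->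
  forall X hot, Inv k orig X hot -> exists X', NEk k X' /\ forall w, (orig w <= cnt X' w)%N.
Proof.
move=> kc X hot.
move: {2}(#|[set Y : asg | Phi orig X < Phi orig Y]|)
  (leqnn #|[set Y : asg | Phi orig X < Phi orig Y]|) => n.
elim: n X hot => [|n IH] X hot Hn HI;
  case: (step kc HI) => [NE|[[X2 [hot2 [HI2 lt]]]|[X2 [NE2 Hc2]]]].
- exists X; split => // w; have [Hc _] := HI; rewrite Hc; exact: leq_addr.
- exfalso; move: Hn; rewrite leqn0 cards_eq0 => /eqP E.
  have : X2 \in [set Y : asg | Phi orig X < Phi orig Y] by rewrite inE.
  by rewrite E inE.
- by exists X2; split => // w; rewrite Hc2 addn0.
- exists X; split => // w; have [Hc _] := HI; rewrite Hc; exact: leq_addr.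
- apply: (IH X2 hot2) => //; rewrite -ltnS; apply: leq_trans Hn.
  apply: proper_card; apply/properP; split.
    by apply/subsetP => Y; rewrite !inE => /(lt_trans lt).
  by exists X2; rewrite !inE ?lt ?ltxx.
- by exists X2; split => // w; rewrite Hc2 addn0.
Qed.

Definition slack (k : I -> {set Omega} -> nat) :=
  (\sum_(p : I * {set Omega} | p.2 \in part G p.1) (cap G p.1 - k p.1 p.2))%N.

Definition kup (k : I -> {set Omega} -> nat) i C :=
  fun j C' => if (j == i) && (C' == C) then (k i C).+1 else k j C'.

Lemma slack_lt k i C : C \in part G i -> (k i C < cap G i)%N -> (slack (kup k i C) < slack k)%N.
Proof.
move=> CP lt; rewrite /slack (bigD1 (i, C)) //= [X in (_ < X)%N](bigD1 (i, C)) //=.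
rewrite /kup !eqxx /=.
set A := (\sum_(p | _) _)%N; set B := (\sum_(p | _) _)%N.
have -> : A = B.
  apply: eq_bigr => [[j C']] /andP [_ ne] /=.
  have -> : (j == i) && (C' == C) = false.
    by apply/negP => /andP [/eqP Ej /eqP EC]; move: ne; rewrite Ej EC eqxx.
  by [].
lia.
Qed.

Lemma fill n (k : I -> {set Omega} -> nat) X :
  (slack k <= n)%N -> (forall i C, C \in part G i -> (k i C <= cap G i)%N) -> NEk k X ->
  exists X', NEk (fun i _ => cap G i) X' /\ forall w, (cnt X w <= cnt X' w)%N.
Proof.
elim: n k X => [|n IH] k X Hs kc NE;
  (case: (classic (exists i C, C \in part G i /\ (k i C < cap G i)%N)); last first).
- move=> Hno; exists X; split => // i C CP.
  have -> : cap G i = k i C.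
    apply/eqP; rewrite eqn_leq kc // andbT leqNgt; apply/negP => lt; apply: Hno; exists i, C; split => //.
  exact: NE.
- move=> [i [C [CP lt]]]; exfalso; have := slack_lt CP lt; rewrite ltnNge => /negP; apply.
  by apply: leq_trans Hs _.
- move=> Hno; exists X; split => // i C CP.
  have -> : cap G i = k i C.
    apply/eqP; rewrite eqn_leq kc // andbT leqNgt; apply/negP => lt; apply: Hno; exists i, C; split => //.
  exact: NE.
move=> [i [C [CP lt]]].
have Hs2 : (slack (kup k i C) <= n)%N by rewrite -ltnS; apply: leq_trans (slack_lt CP lt) Hs.
have kc2 : forall j C', C' \in part G j -> (kup k i C j C' <= cap G j)%N.
  move=> j C' C'P; rewrite /kup; case: ifP => [/andP [/eqP -> _]//|_]; exact: kc.
have kne : forall j C', C' \in part G j -> (j != i) || (C' != C) -> kup k i C j C' = k j C'.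
  move=> j C' _ ne; rewrite /kup; case: ifP => // /andP [/eqP Ej /eqP EC].
  by move: ne; rewrite Ej EC !eqxx.
have kiC : kup k i C i C = (k i C).+1 by rewrite /kup !eqxx.
case: (stable_ins (NE _ _ CP)) => [Hst|[r0 [r0C r0T Hst]]].
  apply: (IH (kup k i C)) => // j C' C'P.
  case: (boolP ((j != i) || (C' != C))) => ne; first by rewrite kne //; apply: NE.
  by move: ne; rewrite negb_or !negbK => /andP [/eqP -> /eqP ->]; rewrite kiC.
have r0X : r0 \notin X i by apply: contra r0T => h; rewrite inE h r0C.
set S := r0 |: X i.
have [Hc0 Hs0] := NE_Inv NE.
have Hc2 : cnt_ok (fun w => cnt X w) (upd X i S) (Some r0).
  move=> w; rewrite cnt_upd (cnt_oth X i) /S !inE.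
  case: (eqVneq w r0) => [->|wr] /=; first by rewrite eqxx (negbTE r0X); lia.
  have -> : (Some r0 == Some w) = false by apply/eqP => -[Er]; move: wr; rewrite Er eqxx.
  by rewrite addn0.
have HI : Inv (kup k i C) (fun w => cnt X w) (upd X i S) (Some r0).
  split => // j C' C'P; case: (boolP ((j != i) || (C' != C))) => ne.
    apply: (upd_frame (k := k) (C := C) CP) => //.
    by move=> w wC; rewrite /S !inE; have -> : (w == r0) = false by apply/eqP => Ew; move: wC; rewrite Ew r0C.
  move: ne; rewrite negb_or !negbK => /andP [/eqP -> /eqP ->]; rewrite kiC.
  apply: (stab_v0_of_val Hc2) => [r1 [<-] _|]; first by rewrite upd_i /S !inE eqxx.
  have -> : upd X i S i :&: C = r0 |: (X i :&: C).
    apply/setP => w; rewrite upd_i /S !inE.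
    by case: (eqVneq w r0) => [->|_] /=; [exact: r0C | by []].
  by apply: stable_mono Hst => w; rewrite val_upd.
have [X' [NE' Hc']] := cascade kc2 HI.
have [X'' [NE'' Hc'']] := IH _ _ Hs2 kc2 NE'.
by exists X''; split => // w; apply: leq_trans (Hc' w) (Hc'' w).
Qed.

Definition prof (X : asg) : profile I Omega := fun i C => X i :&: C.

Lemma searches_prof X i w : searches G (prof X) i w = (w \in X i).
Proof. by rewrite /searches /prof inE in_cell andbT. Qed.

Lemma finders_prof X w : finders G (prof X) w = cnt X w.
Proof. by rewrite /finders /cnt; apply: eq_card => j; rewrite !inE searches_prof. Qed.

Definition socX (X : asg) :=
  \sum_(w : Omega) mu G w * (if (0 < cnt X w)%N then svalue G w else 0).

Lemma social_prof X : social G (prof X) = socX X.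
Proof. by rewrite /social /socX; apply: eq_bigr => w _; rewrite finders_prof. Qed.

Definition validb (X : asg) :=
  [forall i, [forall C, (C \in part G i) ==> (#|X i :&: C| <= cap G i)%N]].

Lemma validbP X i C : validb X -> C \in part G i -> (#|X i :&: C| <= cap G i)%N.
Proof. by move=> /forallP /(_ i) /forallP /(_ C) /implyP; apply. Qed.

Lemma valid_prof X : validb X -> valid_profile G (prof X).
Proof. by move=> V i C CP; split; [apply: subsetIr | apply: validbP]. Qed.

Definition Xof (t : profile I Omega) : asg := [ffun i => [set w | searches G t i w]].

Lemma cnt_Xof t w : cnt (Xof t) w = finders G t w.
Proof. by rewrite /cnt /finders; apply: eq_card => j; rewrite !inE ffunE inE. Qed.

Lemma social_Xof t : socX (Xof t) = social G t.
Proof. by rewrite /social /socX; apply: eq_bigr => w _; rewrite cnt_Xof. Qed.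

Lemma valid_Xof t : valid_profile G t -> validb (Xof t).
Proof.
move=> V; apply/forallP => i; apply/forallP => C; apply/implyP => CP.
have [sub le] := V i C CP; apply: leq_trans le; apply: subset_leq_card.
apply/subsetP => w; rewrite !inE ffunE inE /searches => /andP [H wC].
by rewrite (cell_eq CP wC) in H.
Qed.

Lemma socX_mono X Y : (forall w, (0 < cnt X w)%N -> (0 < cnt Y w)%N) -> socX X <= socX Y.
Proof.
move=> H; apply: ler_sum => w _; case: ifP => h; first by rewrite (H _ h).
by case: ifP => _; rewrite ?mulr0 // mulr_ge0 ?mu_ge0 ?svalue_ge0.
Qed.

Lemma cell_sum i C (S : {set Omega}) (s : profile I Omega) X :
  C \in part G i -> S \subset C ->
  (forall w, w \in C -> searches G s i w = (w \in S)) ->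
  (forall w, w \in C -> finders G s w = (oth X i w + (w \in S))%N) ->
  (forall w, w \in C -> s i (cell G i w) = S) ->
  \sum_(w in C) mu G w * ((if searches G s i w then rew G i (finders G s w) w else 0)
                          - cost G i #|s i (cell G i w)|)
  = \sum_(w in S) valx X i w - cc i C #|S|.
Proof.
move=> CP sSC Hs Hf Hc.
rewrite (eq_bigr (fun w => (if w \in S then valx X i w else 0) - mu G w * cost G i #|S|)); last first.
  move=> w wC; rewrite Hs // Hf // Hc // mulrBr; congr (_ - _).
  by case: ifP => wS; rewrite ?mulr0 // /valx /fv wS addn1.
rewrite sumrB -big_mkcondr /= /cc /mu_set mulr_suml; congr (_ - _).
apply: eq_bigl => w; case: (boolP (w \in S)) => wS; last by rewrite andbF.
by rewrite (subsetP sSC _ wS).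
Qed.

Lemma pay_part (i : I) (F : Omega -> R) :
  \sum_(w : Omega) F w = \sum_(C in part G i) \sum_(w in C) F w.
Proof.
rewrite -(set_partition_big _ (part_ok G i)); apply: eq_bigl => w; by rewrite inE.
Qed.

End Game2.


Section Game3.
Variables (R : realFieldType) (I Omega : finType) (G : searchGame R I Omega).

Lemma dev_cell (X : asg I Omega) i t C w : C \in part G i -> w \in C ->
  deviate (prof X) i t i (cell G i w) = t C.
Proof. move=> CP wC. rewrite /deviate eqxx. by rewrite (cell_eq CP wC). Qed.

Lemma dev_searches (X : asg I Omega) i t C w : C \in part G i -> w \in C ->
  searches G (deviate (prof X) i t) i w = (w \in t C).
Proof. by move=> CP wC; rewrite /searches (dev_cell _ _ CP wC). Qed.

Lemma dev_searches_j (X : asg I Omega) i t j w : j != i ->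
  searches G (deviate (prof X) i t) j w = (w \in X j).
Proof.
move=> ji; rewrite -(searches_prof G X j w) /searches /deviate.
by rewrite (negbTE ji).
Qed.

Lemma dev_finders (X : asg I Omega) i t C w : C \in part G i -> w \in C ->
  finders G (deviate (prof X) i t) w = (oth X i w + (w \in t C))%N.
Proof.
move=> CP wC; rewrite /finders (card_split _ i) /= addnC (dev_searches _ _ CP wC).
congr (_ + _)%N; rewrite /oth; apply: eq_card => j; rewrite !inE.
by case: (eqVneq j i) => //= ji; rewrite dev_searches_j.
Qed.


Lemma NE_final (X : asg I Omega) : NEk G (fun i _ => cap G i) X -> is_pure_NE G (prof X).
Proof.
move=> NE; split.
  by move=> i C CP; have [? ? _ _ _] := NE i C CP; split.
move=> i t Vt; rewrite /payoff (pay_part G i) [Y in _ <= Y](pay_part G i).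
apply: ler_sum => C CP.
have Hst := NE i C CP.
have [tC ltC] := Vt C CP.
rewrite (@cell_sum _ _ _ G i C (t C) _ X CP tC); first last.
- by move=> w wC; rewrite (dev_cell _ _ CP wC).
- by move=> w wC; rewrite (dev_finders _ _ CP wC).
- by move=> w wC; rewrite (dev_searches _ _ CP wC).
rewrite (@cell_sum _ _ _ G i C (X i :&: C) _ X CP (subsetIr _ _)); first last.
- by move=> w wC; rewrite /prof (cell_eq CP wC).
- by move=> w wC; rewrite finders_prof (cnt_oth X i) inE wC andbT.
- by move=> w wC; rewrite searches_prof inE wC andbT.
apply: (stable_opt _ Hst) => //.
by move=> s0 t0 s00 st tk; apply: mcf_mono.
Qed.

End Game3.


Section Game4.
Variables (R : realFieldType) (I Omega : finType) (G : searchGame R I Omega).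
Local Notation asg := (asg I Omega).

Definition disjb (X : asg) :=
  [forall i, [forall j, [forall w, ((w \in X i) && (w \in X j)) ==> (i == j)]]].

Lemma disjbP (X : asg) i j w : disjb X -> w \in X i -> w \in X j -> i = j.
Proof.
move=> /forallP /(_ i) /forallP /(_ j) /forallP /(_ w) /implyP H wi wj.
by apply/eqP; apply: H; rewrite wi wj.
Qed.

Lemma disj_oth (X : asg) i w : disjb X -> w \in X i -> oth X i w = 0%N.
Proof.
move=> D wi; apply/eqP; rewrite cards_eq0; apply/eqP/setP => j; rewrite !inE.
by apply/negP => /andP [ji wj]; move: ji; rewrite (disjbP D wj wi) eqxx.
Qed.

Lemma cnt0P (X : asg) w : cnt X w = 0%N -> forall j, w \notin X j.
Proof.
move=> /eqP; rewrite cards_eq0 => /eqP E j; apply/negP => wj.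
have : j \in [set j | w \in X j] by rewrite inE.
by rewrite E inE.
Qed.

Lemma sum_upd (F : I -> Omega -> R) (X : asg) i (S : {set Omega}) :
  \sum_j \sum_(w in upd X i S j) F j w =
  \sum_j \sum_(w in X j) F j w - \sum_(w in X i) F i w + \sum_(w in S) F i w.
Proof.
rewrite (bigD1 i) //= [in RHS](bigD1 i) //= upd_i.
have -> : \sum_(j | j != i) \sum_(w in upd X i S j) F j w =
          \sum_(j | j != i) \sum_(w in X j) F j w.
  by apply: eq_bigr => j ji; rewrite upd_j.
lra.
Qed.

Definition g w := mu G w * svalue G w.
Definition cov (X : asg) := [set w | (0 < cnt X w)%N].

Lemma socX_cov X : socX G X = \sum_(w in cov X) g w.
Proof.
rewrite /socX [RHS]big_mkcond /=; apply: eq_bigr => w _; rewrite inE /g.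
by case: ifP; rewrite ?mulr0.
Qed.

Lemma validb_upd (X : asg) i (S : {set Omega}) : validb G X ->
  (forall C, C \in part G i -> (#|S :&: C| <= cap G i)%N) -> validb G (upd X i S).
Proof.
move=> V HS; apply/forallP => j; apply/forallP => C; apply/implyP => CP.
case: (eqVneq j i) => [Eji|ji]; first by subst j; rewrite upd_i; apply: HS.
by rewrite upd_j //; apply: validbP.
Qed.

Lemma disjb_upd (X : asg) i (S : {set Omega}) : disjb X ->
  (forall w, w \in S -> w \in X i \/ cnt X w = 0%N) -> disjb (upd X i S).
Proof.
move=> D HS; apply/forallP => j1; apply/forallP => j2; apply/forallP => w; apply/implyP.
have Hin j : w \in upd X i S j -> (j = i /\ w \in S) \/ (j != i /\ w \in X j).
  by case: (eqVneq j i) => [->|ji]; [rewrite upd_i; left | rewrite upd_j //; right].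
move=> /andP [/Hin H1 /Hin H2].
have key : forall j, j != i -> w \in X j -> w \in S -> False.
  move=> j ji wj wS; case: (HS _ wS) => [wi|c0].
    by move: ji; rewrite (disjbP D wj wi) eqxx.
  by move: (cnt0P c0 j); rewrite wj.
case: H1 => [[-> wS]|[j1i wj1]]; case: H2 => [[-> wS']|[j2i wj2]] //.
- by case: (key _ j2i wj2 wS).
- by case: (key _ j1i wj1 wS').
- by rewrite (disjbP D wj1 wj2).
Qed.

Definition Psi (X : asg) := \sum_i \sum_(w in X i) (fv G i 1 w + 1).
Definition sz (X : asg) := \sum_i \sum_(w in X i) (1 : R).

Definition stabA (O : asg) := forall i C w, C \in part G i -> w \in C -> cnt O w = 0%N ->
  #|O i :&: C| = cap G i /\ (forall o, o \in O i :&: C -> fv G i 1 w <= fv G i 1 o).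

Lemma fv_ge0 i m w : (0 < m)%N -> 0 <= fv G i m w.
Proof. by move=> m0; rewrite /fv mulr_ge0 ?mu_ge0 ?rew_ge0. Qed.

Lemma phaseA : ordinally_consistent G ->
  exists O : asg, [/\ validb G O, disjb O,
    (forall Y, validb G Y -> socX G Y <= socX G O) & stabA O].
Proof.
move=> OC.
pose E0 : asg := [ffun _ => set0].
have V0 : validb G E0.
  by apply/forallP => i; apply/forallP => C; apply/implyP => _; rewrite ffunE set0I cards0.
have E0in : E0 \in [set X : asg | validb G X] by rewrite inE.
have [Xm Vm Hm] := @argmax_ex R asg [set X : asg | validb G X] (socX G) E0 E0in.
rewrite inE in Vm.
have HmV Y : validb G Y -> socX G Y <= socX G Xm by move=> VY; apply: Hm; rewrite inE.
pose P1 := [set X : asg | validb G X && (socX G X == socX G Xm)].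
have Xmin : Xm \in P1 by rewrite inE Vm eqxx.
have [Xd Xd1 Hd] := @argmax_ex R asg P1 (fun X => - sz X) Xm Xmin.
move: Xd1; rewrite inE => /andP [Vd /eqP Md].
have Dd : disjb Xd.
  apply/forallP => i; apply/forallP => j; apply/forallP => w; apply/implyP => /andP [wi wj].
  apply/negPn/negP => ij.
  pose Y := upd Xd j (Xd j :\ w).
  have VY : validb G Y.
    apply: validb_upd => // C CP; apply: leq_trans (validbP Vd CP).
    by apply: subset_leq_card; apply: setSI; apply: subsetDl.
  have cY : forall x, (0 < cnt Xd x)%N -> (0 < cnt Y x)%N.
    move=> x; rewrite /Y cnt_upd (cnt_oth Xd j) !inE.
    case: (eqVneq x w) => [->|xw] /=; last by [].
    move=> _; rewrite addn0 lt0n; apply/eqP => /eqP; rewrite cards_eq0 => /eqP E.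
    have : i \in [set k | (k != j) && (w \in Xd k)] by rewrite inE ij wi.
    by rewrite E inE.
  have sY : socX G Y == socX G Xm.
    by rewrite eq_le HmV //= -Md; apply: socX_mono.
  have YP1 : Y \in P1 by rewrite inE VY sY.
  have := Hd Y YP1.
  rewrite /sz (sum_upd (fun _ _ => 1)) (big_setD1 w wj) /=.
  by move=> H; lra.
pose P2 := [set X : asg | [&& validb G X, socX G X == socX G Xm & disjb X]].
have XdP2 : Xd \in P2 by rewrite inE Vd Md eqxx Dd.
have [O O2 HO] := @argmax_ex R asg P2 Psi Xd XdP2.
move: O2; rewrite inE => /and3P [VO /eqP MO DO].
exists O; split => //.
  by move=> Y VY; rewrite MO; apply: HmV.
move=> i C w CP wC c0.
have wX j : w \notin O j := cnt0P c0 j.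
have HOY : forall Y, validb G Y -> disjb Y -> socX G O <= socX G Y -> Psi Y <= Psi O.
  move=> Y VY DY le; apply: HO; rewrite inE VY DY andbT /=.
  by rewrite eq_le HmV //= -MO.
have capeq : #|O i :&: C| = cap G i.
  apply/eqP; rewrite eqn_leq validbP //=; rewrite leqNgt; apply/negP => lt.
  pose Y := upd O i (w |: O i).
  have VY : validb G Y.
    apply: validb_upd => // C' C'P.
    case: (boolP (w \in C')) => wC'.
      have EC := cell_disj CP C'P wC wC'; subst C'.
      have -> : (w |: O i) :&: C = w |: (O i :&: C).
        by apply/setP => x; rewrite !inE; case: (eqVneq x w) => [->|] //=; rewrite wC.
      by rewrite cardsU1 inE (negbTE (wX i)) /= add1n.
    have -> : (w |: O i) :&: C' = O i :&: C'.
      apply/setP => x; rewrite !inE; case: (eqVneq x w) => [->|] //=.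
      by rewrite (negbTE wC') (negbTE (wX i)).
    exact: validbP.
  have DY : disjb Y.
    by apply: disjb_upd => // x; rewrite in_setU1 => /orP [/eqP ->|xi]; [right | left].
  have le : socX G O <= socX G Y.
    apply: socX_mono => x; rewrite /Y cnt_upd (cnt_oth O i) in_setU1.
    by case: (x == w); case: (x \in O i) => //=; rewrite ?addn0 ?addn1.
  have := HOY Y VY DY le; rewrite /Psi (sum_upd (fun i w => fv G i 1 w + 1)) big_setU1 /= ?wX //.
  by move=> H; have := fv_ge0 i w (ltn0Sn 0); lra.
split => // o oT.
rewrite leNgt; apply/negP => lt.
have oi : o \in O i by move: oT; rewrite inE => /andP [].
have oC : o \in C by move: oT; rewrite inE => /andP [].
have ow : o != w by apply: contraTneq oi => ->; apply: wX.
pose S := w |: (O i :\ o).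
pose Y := upd O i S.
have VY : validb G Y.
  apply: validb_upd => // C' C'P.
  case: (boolP (w \in C')) => wC'.
    have EC := cell_disj CP C'P wC wC'; subst C'.
    have -> : S :&: C = w |: (O i :&: C :\ o).
      by apply/setP => x; rewrite /S !inE; case: (eqVneq x w) => [->|_] //=; rewrite andbA.
    rewrite cardsU1 !inE (negbTE (wX i)) andbF /= add1n.
    by move: capeq; rewrite (cardsD1 o (O i :&: C)) oT => <-.
  apply: leq_trans (validbP VO C'P); apply: subset_leq_card.
  apply/subsetP => x; rewrite !inE => /andP [/orP [/eqP ->|/andP [_ xi]] xC'].
    by rewrite xC' in wC'.
  by rewrite xi xC'.
have DY : disjb Y.
  apply: disjb_upd => // x; rewrite !inE => /orP [/eqP ->|/andP [_ xi]]; [right | left] => //.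
have covY : cov Y = w |: (cov O :\ o).
  apply/setP => x; rewrite !inE /Y cnt_upd (cnt_oth O i) /S !inE.
  case: (eqVneq x w) => [->|xw] /=.
    by move: c0; rewrite (cnt_oth O i) (negbTE (wX i)) addn0 => ->.
  case: (eqVneq x o) => [->|xo] /=.
    by rewrite (disj_oth DO oi).
  by [].
have go : g o <= g w.
  by apply: (OC i C CP o w oC wC); move: lt; rewrite /fv.
have oc : o \in cov O by rewrite inE (cnt_oth O i) oi addn1.
have le : socX G O <= socX G Y.
  rewrite !socX_cov covY big_setU1 /=; last by rewrite !inE negb_and c0 orbT.
  by rewrite (big_setD1 o oc) /=; lra.
have := HOY Y VY DY le; rewrite /Psi (sum_upd (fun i w => fv G i 1 w + 1)).
rewrite (big_setD1 o oi) big_setU1 /=; last by rewrite !inE negb_and (negbTE (wX i)) orbT.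
by move=> H; lra.
Qed.

End Game4.


Section Game5.
Variables (R : realFieldType) (I Omega : finType) (G : searchGame R I Omega).

Lemma ssd_fv i C w w' : solitary_search_dominant G -> C \in part G i -> w \in C -> w' \in C ->
  fv G i 2 w' <= fv G i 1 w /\ mcf G i C (cap G i) <= fv G i 1 w.
Proof.
move=> SSD CP wC w'C; have [H1 H2] := SSD i C CP w w' wC w'C.
have p := mu_set_pos CP.
have E x m : fv G i m x = mu_set G C * (mu_cond G x C * rew G i m x).
  rewrite /mu_cond /fv mulrA [mu_set G C * _]mulrCA mulfV ?mulr1 //.
  by apply: lt0r_neq0.
split; first by rewrite (E w' 2%N) (E w 1%N) ler_pM2l.
by rewrite /mcf /cc -mulrBr (E w 1%N) ler_pM2l.
Qed.

Lemma base_NE (O : asg I Omega) : solitary_search_dominant G -> validb G O -> disjb O -> stabA G O ->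
  NEk G (fun i C => #|O i :&: C|) O.
Proof.
move=> SSD VO DO SA i C CP.
have valT w : w \in O i :&: C -> valx G O i w = fv G i 1 w.
  by rewrite inE => /andP [wi _]; rewrite /valx (disj_oth DO wi).
split => //.
- exact: subsetIr.
- move=> w w' wT w'C w'T; rewrite (valT w wT).
  have wC : w \in C by move: wT; rewrite inE => /andP [].
  have w'X : w' \notin O i by apply: contra w'T => h; rewrite inE h w'C.
  rewrite /valx; case E: (oth O i w') => [|m].
    have c0 : cnt O w' = 0%N by rewrite (cnt_oth O i) E (negbTE w'X).
    by have [_ H] := SA i C w' CP w'C c0; apply: H.
  apply: le_trans (fv_mono G i w' _ _) (ssd_fv SSD CP wC w'C).1 => //.
- move=> w wT; rewrite (valT w wT).
  have wC : w \in C by move: wT; rewrite inE => /andP [].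
  apply: le_trans (ssd_fv SSD CP wC wC).2.
  apply: mcf_mono => //; first by apply/card_gt0P; exists w.
  exact: validbP.
- by rewrite ltnn.
Qed.

End Game5.

Unset Implicit Arguments.

Theorem theorem1 (R : realFieldType) (I Omega : finType)
  (G : searchGame R I Omega) :
  ordinally_consistent G -> solitary_search_dominant G ->
  exists s : profile I Omega, is_pure_NE G s /\ socially_optimal G s.
Proof.
move=> OC SSD.
have [O [VO DO MO SO]] := phaseA OC.
have NE0 := base_NE SSD VO DO SO.
have kc0 : forall i C, C \in part G i -> (#|O i :&: C| <= cap G i)%N.
  by move=> i C CP; apply: validbP.
have [X' [NE' Hc']] := fill (leqnn _) kc0 NE0.
exists (prof X'); split; first exact: NE_final.
split.
  by move=> i C CP; have [? ? _ _ _] := NE' i C CP; split.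
move=> t Vt; rewrite social_prof -social_Xof.
apply: le_trans (MO _ (valid_Xof Vt)) _.
by apply: socX_mono => w h; apply: leq_trans h (Hc' w).
Qed.
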